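(* Let $(R,\mathfrak{m},k)$ be a Noetherian local ring. Suppose that for every finitely generated torsion-less $R$-module $M$, freeness of $M^\ast=\operatorname{Hom}_R(M,R)$ implies freeness of $M$. Then $\operatorname{depth}(R)<2$.
   Context: A module $M$ is torsion-less if the natural map $M\to M^{\ast\ast}$ is injective. *)

(* Defs.v *)
From HB Require Import structures.
From mathcomp Require Import all_boot all_order all_algebra.
Set Implicit Arguments. Unset Strict Implicit. Unset Printing Implicit Defensive.
Import GRing.Theory.
Local Open Scope ring_scope.

Definition is_ideal (R : comNzRingType) (I : R -> Prop) : Prop :=
  [/\ I 0, (forall x y, I x -> I y -> I (x + y)) & (forall r x, I x -> I (r * x))].

Definition is_proper_ideal (R : comNzRingType) (I : R -> Prop) : Prop :=
  is_ideal I /\ ~ I 1.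

Definition is_maximal_ideal (R : comNzRingType) (I : R -> Prop) : Prop :=
  is_proper_ideal I /\
  forall J : R -> Prop, is_proper_ideal J -> (forall x, I x -> J x) ->
    forall x, J x -> I x.

Definition is_local_with_max (R : comNzRingType) (m : R -> Prop) : Prop :=
  is_maximal_ideal m /\
  forall n : R -> Prop, is_maximal_ideal n -> forall x, n x <-> m x.

Definition in_ideal_gen (R : comNzRingType) (xs : seq R) (r : R) : Prop :=
  exists c : 'I_(size xs) -> R, r = \sum_(i < size xs) c i * xs`_i.

Definition noetherian (R : comNzRingType) : Prop :=
  forall I : R -> Prop, is_ideal I ->
    exists xs : seq R, forall r, I r <-> in_ideal_gen xs r.

Definition R_regular_seq (R : comNzRingType) (xs : seq R) : Prop :=
  (forall i, (i < size xs)%N -> forall r : R,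
      in_ideal_gen (take i xs) (xs`_i * r) -> in_ideal_gen (take i xs) r)
  /\ ~ in_ideal_gen xs 1.

(* depth R < 2 for the local ring (R, m): every R-regular sequence
   contained in m has length < 2 (depth = sup of such lengths) *)
Definition depth_lt2 (R : comNzRingType) (m : R -> Prop) : Prop :=
  forall xs : seq R, (forall x, x \in xs -> m x) -> R_regular_seq xs ->
    (size xs < 2)%N.

Definition in_span (R : comNzRingType) (M : lmodType R) (s : seq M) (v : M)
  : Prop :=
  exists c : 'I_(size s) -> R, v = \sum_(i < size s) c i *: s`_i.

Definition fin_gen (R : comNzRingType) (M : lmodType R) : Prop :=
  exists s : seq M, forall v : M, in_span s v.

Definition lin_indep (R : comNzRingType) (M : lmodType R) (s : seq M) : Prop :=
  forall c : 'I_(size s) -> R, \sum_(i < size s) c i *: s`_i = 0 ->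
    forall i, c i = 0.

(* free (with a finite basis; all modules considered here are f.g.) *)
Definition free_mod (R : comNzRingType) (M : lmodType R) : Prop :=
  exists s : seq M, (forall v : M, in_span s v) /\ lin_indep s.

Definition is_linfun (R : comNzRingType) (M : lmodType R) (f : M -> R) : Prop :=
  forall (a : R) (u v : M), f (a *: u + v) = a * f u + f v.

Definition dual_free (R : comNzRingType) (M : lmodType R) : Prop :=
  exists fs : seq (M -> R),
    (forall i : 'I_(size fs), is_linfun (nth (fun _ => 0) fs i)) /\
    (forall g : M -> R, is_linfun g ->
       exists c : 'I_(size fs) -> R,
         forall v, g v = \sum_(i < size fs) c i * nth (fun _ => 0) fs i v) /\
    (forall c : 'I_(size fs) -> R,
       (forall v, \sum_(i < size fs) c i * nth (fun _ => 0) fs i v = 0) ->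
       forall i, c i = 0).

(* torsion-less: the natural map M -> M^** , v |-> (f |-> f v), is injective *)
Definition torsionless (R : comNzRingType) (M : lmodType R) : Prop :=
  forall u v : M, (forall f : M -> R, is_linfun f -> f u = f v) -> u = v.

(* Main.v *)
From HB Require Import structures.
Require Import Defs.
From mathcomp Require Import all_boot all_order all_algebra.
From mathcomp Require Import boolp.
Set Implicit Arguments. Unset Strict Implicit. Unset Printing Implicit Defensive.
Import GRing.Theory.
Local Open Scope ring_scope.

Definition inxy (R : comNzRingType) (x y : R) (r : R) : Prop :=
  exists p q, r = p * x + q * y.
Definition Mxy (R : comNzRingType) (x y : R) := {r : R | inxy x y r}.

HB.instance Definition _ (R : comNzRingType) (x y : R) := gen_eqMixin (Mxy x y).
HB.instance Definition _ (R : comNzRingType) (x y : R) := gen_choiceMixin (Mxy x y).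

Lemma Minj (R : comNzRingType) (x y : R) (u v : Mxy x y) : proj1_sig u = proj1_sig v -> u = v.
Proof. by case: u v => [a ha] [b hb] /= e; subst b; rewrite (Prop_irrelevance ha hb). Qed.

Lemma inxy0 (R : comNzRingType) (x y : R) : inxy x y 0.
Proof. by exists 0, 0; rewrite !mul0r addr0. Qed.
Lemma inxyD (R : comNzRingType) (x y : R) a b : inxy x y a -> inxy x y b -> inxy x y (a + b).
Proof. by case=> p [q ->] [p' [q' ->]]; exists (p + p'), (q + q'); rewrite !mulrDl; rewrite addrACA. Qed.
Lemma inxyN (R : comNzRingType) (x y : R) a : inxy x y a -> inxy x y (- a).
Proof. by case=> p [q ->]; exists (- p), (- q); rewrite !mulNr opprD. Qed.
Lemma inxyZ (R : comNzRingType) (x y : R) c a : inxy x y a -> inxy x y (c * a).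
Proof. by case=> p [q ->]; exists (c * p), (c * q); rewrite mulrDr !mulrA. Qed.

Definition Mzero (R : comNzRingType) (x y : R) : Mxy x y := exist _ 0 (inxy0 x y).
Definition Madd (R : comNzRingType) (x y : R) (u v : Mxy x y) : Mxy x y :=
  exist _ (proj1_sig u + proj1_sig v) (inxyD (proj2_sig u) (proj2_sig v)).
Definition Mopp (R : comNzRingType) (x y : R) (u : Mxy x y) : Mxy x y :=
  exist _ (- proj1_sig u) (inxyN (proj2_sig u)).
Definition Mscale (R : comNzRingType) (x y : R) (c : R) (u : Mxy x y) : Mxy x y :=
  exist _ (c * proj1_sig u) (inxyZ c (proj2_sig u)).

Lemma MaddA (R : comNzRingType) (x y : R) : associative (@Madd R x y).
Proof. by move=> a b c; apply: Minj; rewrite /= addrA. Qed.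
Lemma MaddC (R : comNzRingType) (x y : R) : commutative (@Madd R x y).
Proof. by move=> a b; apply: Minj; rewrite /= addrC. Qed.
Lemma Madd0 (R : comNzRingType) (x y : R) : left_id (Mzero x y) (@Madd R x y).
Proof. by move=> a; apply: Minj; rewrite /= add0r. Qed.
Lemma MaddN (R : comNzRingType) (x y : R) : left_inverse (Mzero x y) (@Mopp R x y) (@Madd R x y).
Proof. by move=> a; apply: Minj; rewrite /= addNr. Qed.

HB.instance Definition _ (R : comNzRingType) (x y : R) :=
  GRing.isZmodule.Build (Mxy x y) (@MaddA R x y) (@MaddC R x y) (@Madd0 R x y) (@MaddN R x y).

Lemma MscaleA (R : comNzRingType) (x y : R) a b (v : Mxy x y) : Mscale a (Mscale b v) = Mscale (a * b) v.
Proof. by apply: Minj; rewrite /= mulrA. Qed.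
Lemma Mscale1 (R : comNzRingType) (x y : R) : left_id 1 (@Mscale R x y).
Proof. by move=> v; apply: Minj; rewrite /= mul1r. Qed.
Lemma MscaleDr (R : comNzRingType) (x y : R) : right_distributive (@Mscale R x y) +%R.
Proof. by move=> a u v; apply: Minj; rewrite /= mulrDr. Qed.
Lemma MscaleDl (R : comNzRingType) (x y : R) (v : Mxy x y) : {morph (fun a => @Mscale R x y a v) : a b / a + b}.
Proof. by move=> a b; apply: Minj; rewrite /= mulrDl. Qed.

HB.instance Definition _ (R : comNzRingType) (x y : R) :=
  GRing.Zmodule_isLmodule.Build R (Mxy x y) (@MscaleA R x y) (@Mscale1 R x y) (@MscaleDr R x y) (@MscaleDl R x y).

Lemma valZ (R : comNzRingType) (x y : R) (a : R) (u v : Mxy x y) :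
  proj1_sig (a *: u + v) = a * proj1_sig u + proj1_sig v.
Proof. by []. Qed.

Lemma valsum (R : comNzRingType) (x y : R) n (F : 'I_n -> Mxy x y) :
  proj1_sig (\sum_(i < n) F i) = \sum_(i < n) proj1_sig (F i).
Proof. by apply: (big_morph (fun v : Mxy x y => proj1_sig v)). Qed.

Lemma sum2 (V : nmodType) n (F : 'I_n.+2 -> V) :
  (forall i : 'I_n.+2, (1 < i)%N -> F i = 0) ->
  \sum_(i < n.+2) F i = F ord0 + F (lift ord0 ord0).
Proof.
move=> H; rewrite 2!big_ord_recl big1 ?addr0.
  by [].
by move=> i _; apply: H.
Qed.

Lemma linfun0 (R : comNzRingType) (M : lmodType R) (g : M -> R) :
  is_linfun g -> g 0 = 0.
Proof.
move=> hg; have := hg 1 0 0; rewrite scaler0 addr0 mul1r.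
by move/(congr1 (fun t => t - g 0)); rewrite addrK subrr.
Qed.

Lemma linfunZ (R : comNzRingType) (M : lmodType R) (g : M -> R) a u :
  is_linfun g -> g (a *: u) = a * g u.
Proof. by move=> hg; have := hg a u 0; rewrite addr0 linfun0 // addr0. Qed.

Lemma linfunD (R : comNzRingType) (M : lmodType R) (g : M -> R) u v :
  is_linfun g -> g (u + v) = g u + g v.
Proof. by move=> hg; have := hg 1 u v; rewrite scale1r mul1r. Qed.

Theorem proposition4p20 (R : comNzRingType) (m : R -> Prop) :
  noetherian R -> is_local_with_max m ->
  (forall M : lmodType R, fin_gen M -> torsionless M -> dual_free M -> free_mod M) ->
  depth_lt2 m.
Proof.
move=> _ _ H xs _ [Hreg H1]; rewrite ltnNge; apply/negP => Hs.
case: xs Hs Hreg H1 => [|x [|y rest]] //= _ Hreg H1.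
have hx : forall r, x * r = 0 -> r = 0.
  move=> r e; have [|c ->] := Hreg 0%N isT r; last by rewrite big_ord0.
  by exists (fun _ => 0); rewrite big_ord0.
have hy : forall r e, y * r = e * x -> exists f, r = f * x.
  move=> r e h; have [|c ->] := Hreg 1%N isT r.
    by exists (fun _ => e); rewrite big_ord1 /=.
  by exists (c ord0); rewrite big_ord1.
have h1 : forall p q, p * x + q * y <> 1.
  move=> p q e; apply: H1.
  exists (fun i : 'I_(size rest).+2 => if val i == 0%N then p else if val i == 1%N then q else 0).
  rewrite sum2.
  2: by case=> [[|[|k]] ?] //= _; rewrite mul0r.
  by rewrite /= e.
pose M := Mxy x y.
have ix : inxy x y x by exists 1, 0; rewrite mul1r mul0r addr0.
have iy : inxy x y y by exists 0, 1; rewrite mul1r mul0r add0r.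
pose gx : M := exist _ x ix.
pose gy : M := exist _ y iy.
have Hfg : fin_gen M.
  exists [:: gx; gy] => -[w [p [q hw]]].
  exists (fun i : 'I_2 => if val i == 0%N then p else q).
  by apply: Minj; rewrite valsum 2!big_ord_recl big_ord0 /= addr0.
have Htl : torsionless M.
  by move=> u v hf; apply: Minj; apply: (hf (fun v : M => proj1_sig v)).
have Hdf : dual_free M.
  exists [:: (fun v : M => proj1_sig v)]; split; [|split].
  - by case=> [[|k] hk] //= a u v.
  - move=> g hg.
    have exy : y *: gx = x *: gy by apply: Minj; rewrite /= mulrC.
    have := congr1 g exy; rewrite !linfunZ // => e1.
    have [e he] := hy (g gx) (g gy) (etrans e1 (mulrC _ _)).
    have hY : g gy = e * y.
      apply/eqP; rewrite -subr_eq0; apply/eqP; apply: hx.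
      by rewrite mulrBr -e1 he [e * x]mulrC [e * y]mulrC !mulrA [y * x]mulrC subrr.
    exists (fun _ => e); case=> w [p [q hw]].
    have -> : exist _ w (ex_intro _ p (ex_intro _ q hw)) = p *: gx + q *: gy :> M.
      by apply: Minj.
    rewrite big_ord1 /= linfunD // !linfunZ // he hY.
    by rewrite mulrDr !mulrA [e * p]mulrC [e * q]mulrC.
  - move=> c hc i; rewrite ord1; apply: hx.
    by have := hc gx; rewrite big_ord1 /= mulrC.
have [s [Hsp Hli]] := H M Hfg Htl Hdf.
case: s Hsp Hli => [|s0 [|s1 s']] Hsp Hli.
- have [c /(congr1 (fun v : M => proj1_sig v))] := Hsp gx.
  rewrite big_ord0 /= => ex0.
  by apply: (negP (oner_neq0 R)); apply/eqP; apply: hx; rewrite ex0 mul0r.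
- move: Hsp Hli; case: s0 => g [u [v hg]] Hsp Hli.
  have [ca /(congr1 (fun v : M => proj1_sig v))] := Hsp gx.
  rewrite valsum big_ord1 /= => exa.
  have [cb /(congr1 (fun v : M => proj1_sig v))] := Hsp gy.
  rewrite valsum big_ord1 /= => eyb.
  have [f hf] : exists f, ca ord0 = f * x.
    apply: (hy _ (cb ord0)).
    by rewrite eyb exa mulrAC mulrA.
  apply: (h1 (f * u) (f * v)).
  have : x * (1 - f * g) = 0.
    have ex : x = f * x * g by rewrite {1}exa hf.
    by rewrite mulrBr mulr1 mulrA [x * f]mulrC -ex subrr.
  move/hx/eqP; rewrite subr_eq0 => /eqP ->.
  by rewrite hg mulrDr !mulrA.
- pose a := proj1_sig s0; pose b := proj1_sig s1.
  have hb : b = 0.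
    have := Hli (fun i : 'I_(size s').+2 => if val i == 0%N then b else if val i == 1%N then - a else 0).
    move=> /(_ _ ord0) /= -> //.
    rewrite sum2; last by case=> [[|[|k]] ?] //= _; rewrite scale0r.
    by apply: Minj; rewrite /= mulrC mulNr addrN.
  apply: (negP (oner_neq0 R)); apply/eqP.
  have := Hli (fun i : 'I_(size s').+2 => if val i == 1%N then 1 else 0).
  move=> /(_ _ (lift ord0 ord0)) /= -> //.
  rewrite sum2; last by case=> [[|[|k]] ?] //= _; rewrite scale0r.
  by apply: Minj; rewrite /= -/b hb mul0r mulr0 addr0.
Qed.
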